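(* Let $\mathcal{P}$ be a finite corpus of programs, let $S$ be the (finite) set of complete abstractions whose size does not exceed the size of the largest program in $\mathcal{P}$, and let $U$ be any real-valued utility function on complete abstractions. Run the naïve top-down search over $S$ augmented with strict dominance pruning, i.e. at any step the search may discard a popped partial abstraction $\hat A'$ instead of expanding it, provided that there exists some partial abstraction $\hat A''$ that strictly dominates $\hat A'$ (whether or not $\hat A''$ has itself been enumerated or pruned). Then the search finds an optimal abstraction, i.e. a complete abstraction $A^\ast\in S$ with $U(A^\ast)\ge U(A)$ for all $A\in S$.
   Context: Programs are closed untyped lambda-calculus terms with de Bruijn indices: $e ::= \lambda.\,e \mid (e\ e) \mid \$i \mid t$, where $\$i$ refers to the variable bound by the $i$-th closest enclosing $\lambda$ and $t$ ranges over a fixed set of primitive symbols. A (complete) abstraction is a term of the grammar $A ::= \lambda.\,A \mid (A\ A) \mid \$i \mid t \mid \alpha$, where $\alpha,\beta,\dots$ are abstraction variables (it represents the body of a function taking the abstraction variables as arguments). A partial abstraction additionally may contain holes $??$: $\hat A ::= A \mid ?? \mid \lambda.\,\hat A \mid (\hat A\ \hat A)$, each hole carrying a unique index. An expansion $\hat A\to\hat A'$ replaces one hole of $\hat A$ by one production of the partial-abstraction grammar ($\lambda.\,??$, $(??\ ??)$ with fresh holes, some $\$i$, some primitive $t$, or an abstraction variable, new or already present). $\hat A\to^\ast A$ (''$A$ is derivable from $\hat A$'') denotes the reflexive–transitive closure of expansion; every abstraction is derivable from $??$. The naïve search keeps a queue initialized with the single partial abstraction $??$; at each step it pops a partial abstraction,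 chooses a hole, and expands it in every possible way, pushing resulting partial abstractions onto the queue and, for resulting complete abstractions, computing their utility and updating the best abstraction found so far; it never produces abstractions larger than the largest program in $\mathcal{P}$, so without pruning it enumerates each element of $S$ exactly once. A complete abstraction $A''$ covers a complete abstraction $A'$ if $U(A'')>U(A')$. A partial abstraction $\hat A''$ strictly dominates a partial abstraction $\hat A'$ if for every complete $A'$ with $\hat A'\to^\ast A'$ there exists a complete $A''$ with $\hat A''\to^\ast A''$ such that $A''$ covers $A'$ (abstractions ranging over $S$). *)

(* Defs.v *)
From mathcomp Require Import all_boot all_order all_algebra.
From mathcomp Require Import reals.

Set Implicit Arguments.
Unset Strict Implicit.
Unset Printing Implicit Defensive.

Import Order.TTheory GRing.Theory Num.Theory.

Section Defs.
Variable T : finType. (* the fixed (finite) set of primitive symbols *)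

(** Programs: untyped lambda terms with de Bruijn indices and primitives. *)
Inductive term : Type :=
| TLam : term -> term
| TApp : term -> term -> term
| TVar : nat -> term
| TPrim : T -> term.

Fixpoint tsize (e : term) : nat :=
  match e with
  | TLam b => (tsize b).+1
  | TApp a b => (tsize a + tsize b).+1
  | TVar _ => 1
  | TPrim _ => 1
  end.

(* every $i refers to an enclosing lambda (d = number of enclosing lambdas) *)
Fixpoint tscoped (d : nat) (e : term) : bool :=
  match e with
  | TLam b => tscoped d.+1 b
  | TApp a b => tscoped d a && tscoped d b
  | TVar i => i < d
  | TPrim _ => true
  end.

Definition tclosed (e : term) : bool := tscoped 0 e.

(** Partial abstractions: complete abstractions plus holes ??.
    Abstraction variables alpha, beta, ... are PAVar 0, PAVar 1, ... *)
Inductive pabs : Type :=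
| PHole : pabs
| PLam : pabs -> pabs
| PApp : pabs -> pabs -> pabs
| PVar : nat -> pabs
| PPrim : T -> pabs
| PAVar : nat -> pabs.

Fixpoint psize (A : pabs) : nat :=
  match A with
  | PLam b => (psize b).+1
  | PApp a b => (psize a + psize b).+1
  | _ => 1
  end.

Fixpoint complete (A : pabs) : bool :=
  match A with
  | PHole => false
  | PLam b => complete b
  | PApp a b => complete a && complete b
  | _ => true
  end.

Fixpoint pscoped (d : nat) (A : pabs) : bool :=
  match A with
  | PLam b => pscoped d.+1 b
  | PApp a b => pscoped d a && pscoped d b
  | PVar i => i < d
  | _ => true
  end.

(* number of abstraction variables in use: 1 + largest index (0 if none);
   the "new" abstraction variable is PAVar (nvars A) *)
Fixpoint nvars (A : pabs) : nat :=
  match A with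
  | PLam b => nvars b
  | PApp a b => maxn (nvars a) (nvars b)
  | PAVar k => k.+1
  | _ => 0
  end.

Fixpoint avars (A : pabs) : seq nat :=
  match A with
  | PLam b => avars b
  | PApp a b => avars a ++ avars b
  | PAVar k => [:: k]
  | _ => [::]
  end.

(* canonical naming: variables are introduced in order of first occurrence *)
Fixpoint canon_from (n : nat) (s : seq nat) : bool :=
  match s with
  | [::] => true
  | k :: s' => (k <= n) && canon_from (maxn n k.+1) s'
  end.

Definition canonical (A : pabs) : bool := canon_from 0 (avars A).

(** One expansion step  A -> A'  at an arbitrary hole.
    [d] = number of lambdas enclosing the hole inside the abstraction,
    [nv] = nvars of the whole partial abstraction. *)
Inductive production (d nv : nat) : pabs -> Prop :=
| prod_lam : production d nv (PLam PHole)
| prod_app : production d nv (PApp PHole PHole)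
| prod_var i : i < d -> production d nv (PVar i)
| prod_prim t : production d nv (PPrim t)
| prod_avar k : k <= nv -> production d nv (PAVar k).

Inductive expand_at (d nv : nat) : pabs -> pabs -> Prop :=
| ex_hole p : production d nv p -> expand_at d nv PHole p
| ex_lam b b' : expand_at d.+1 nv b b' -> expand_at d nv (PLam b) (PLam b')
| ex_appl a a' b : expand_at d nv a a' -> expand_at d nv (PApp a b) (PApp a' b)
| ex_appr a b b' : expand_at d nv b b' -> expand_at d nv (PApp a b) (PApp a b').

Definition expand (A A' : pabs) : Prop := expand_at 0 (nvars A) A A'.

Inductive derivable : pabs -> pabs -> Prop :=
| der_refl A : derivable A A
| der_step A B C : expand A B -> derivable B C -> derivable A C.

Definition inS (bound : nat) (A : pabs) : Prop :=
  [/\ complete A, pscoped 0 A, canonical A & psize A <= bound].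

Definition corpus_bound (P : seq term) : nat := \max_(p <- P) tsize p.

(** Expansion performed by the search: all ways of filling the leftmost
    (first in preorder) hole. *)
Definition fills (d nv : nat) : seq pabs :=
  [:: PLam PHole; PApp PHole PHole] ++ map PVar (iota 0 d)
    ++ map PPrim (enum T) ++ map PAVar (iota 0 nv.+1).

Fixpoint expl (d nv : nat) (A : pabs) : seq pabs :=
  match A with
  | PHole => fills d nv
  | PLam b => map PLam (expl d.+1 nv b)
  | PApp a b =>
      if complete a then map (PApp a) (expl d nv b)
      else map (fun a' => PApp a' b) (expl d nv a)
  | _ => [::]
  end.

Definition children (bound : nat) (A : pabs) : seq pabs :=
  [seq c <- expl 0 (nvars A) A | psize c <= bound].

Section Search.
Variable R : realType.
Variable U : pabs -> R.
Variable bound : nat.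

Definition covers (A2 A1 : pabs) : Prop := (U A1 < U A2)%R.

Definition strictly_dominates (H2 H1 : pabs) : Prop :=
  forall A1, inS bound A1 -> derivable H1 A1 ->
    exists2 A2, inS bound A2 & derivable H2 A2 /\ covers A2 A1.

Record state := State { queue : seq pabs; best : option pabs }.

Definition update (b : option pabs) (c : pabs) : option pabs :=
  match b with
  | None => Some c
  | Some a => if (U a < U c)%R then Some c else Some a
  end.

Definition init_state : state := State [:: PHole] None.

Inductive step : state -> state -> Prop :=
| step_expand A q b :
    step (State (A :: q) b)
         (State (q ++ [seq c <- children bound A | ~~ complete c])
                (foldl update b [seq c <- children bound A | complete c]))
| step_prune A q b :
    (exists H, strictly_dominates H A) ->
    step (State (A :: q) b) (State q b).

Inductive reachable : state -> Prop :=
| reach_init : reachable init_state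
| reach_step s s' : reachable s -> step s s' -> reachable s'.

End Search.
End Defs.

(* Main.v *)
From HB Require Import structures.
Require Import Defs.
From mathcomp Require Import all_boot all_order all_algebra.
From mathcomp Require Import reals.
From mathcomp Require Import zify.
Import Order.TTheory GRing.Theory Num.Theory.

Set Implicit Arguments.
Unset Strict Implicit.
Unset Printing Implicit Defensive.

Section EqP.
Variable T : finType.
Fixpoint pabs_eqb (a b : pabs T) : bool :=
  match a, b with
  | PHole, PHole => true
  | PLam x, PLam y => pabs_eqb x y
  | PApp x1 x2, PApp y1 y2 => pabs_eqb x1 y1 && pabs_eqb x2 y2
  | PVar i, PVar j => i == j
  | PPrim t, PPrim u => t == u
  | PAVar i, PAVar j => i == j
  | _, _ => false
  end.

Lemma pabs_eqP : Equality.axiom pabs_eqb.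
Proof.
elim=> [|x IH|x1 IH1 x2 IH2|i|t|i] [|y|y1 y2|j|u|j] /=; try by constructor.
- by apply: (iffP (IH y)) => [->|[]].
- apply: (iffP andP) => [[H1 H2]|[E1 E2]].
    move: (IH1 y1) (IH2 y2) H1 H2 => R1 R2 H1 H2.
    by rewrite (elimT R1 H1) (elimT R2 H2).
  by rewrite -E1 -E2; split; [apply/(IH1 x1)|apply/(IH2 x2)].
- by apply: (iffP eqP) => [->|[]].
- by apply: (iffP eqP) => [->|[]].
- by apply: (iffP eqP) => [->|[]].
Qed.
End EqP.

HB.instance Definition _ (T : finType) := hasDecEq.Build (pabs T) (@pabs_eqP T).

Section Lemmas.
Variable T : finType.
Local Notation pabs := (pabs T).

Fixpoint holes (A : pabs) : nat :=
  match A with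
  | PHole => 1
  | PLam b => holes b
  | PApp a b => holes a + holes b
  | _ => 0
  end.

Lemma psize_gt0 (A : pabs) : 0 < psize A.
Proof. by case: A. Qed.

Lemma holes_le (A : pabs) : holes A <= psize A.
Proof. elim: A => //= [b IH|a IHa b IHb]; lia. Qed.

Lemma fills_cases d nv (c : pabs) : c \in fills T d nv ->
  c = PLam (PHole T) \/ c = PApp (PHole T) (PHole T) \/
     (exists2 i, i < d & c = PVar T i) \/ (exists t, c = PPrim t) \/
     (exists2 k, k <= nv & c = PAVar T k).
Proof.
rewrite /fills !mem_cat.
case/orP => [|/orP[/mapP[i + ->]|/orP[/mapP[t _ ->]|/mapP[k + ->]]]];
  rewrite ?mem_iota.
- by rewrite !inE => /orP[/eqP->|/eqP->]; [left|right; left].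
- by right; right; left; exists i => //; lia.
- by right; right; right; left; exists t.
- by right; right; right; right; exists k => //; lia.
Qed.

Lemma expl_size d nv (A c : pabs) : c \in expl d nv A ->
  2 * psize A + holes c < 2 * psize c + holes A.
Proof.
elim: A d c => [|b IH|a IHa b IHb|i|t|i] d c //=.
-   by case/fills_cases => [->|[->|[[i _ ->]|[[t ->]|[k _ ->]]]]] /=.
- case/mapP=> c' /IH h ->/=; lia.
- case: (complete a).
  + case/mapP=> c' /IHb h ->/=; lia.
  + case/mapP=> c' /IHa h ->/=; lia.
Qed.

Lemma expl_expand d nv (A c : pabs) : c \in expl d nv A -> expand_at d nv A c.
Proof.
elim: A d c => [|b IH|a IHa b IHb|i|t|i] d c //=.
- by case/fills_cases => [->|[->|[[i ? ->]|[[t ->]|[k ? ->]]]]]; do 2 constructor.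
- by case/mapP=> c' /IH h ->; constructor.
- case: (complete a).
  + by case/mapP=> c' /IHb h ->; constructor.
  + by case/mapP=> c' /IHa h ->; constructor.
Qed.

Lemma expl_scoped d nv (A c : pabs) : c \in expl d nv A -> pscoped d A -> pscoped d c.
Proof.
elim: A d c => [|b IH|a IHa b IHb|i|t|i] d c //=.
- by case/fills_cases => [->|[->|[[i ? ->]|[[t ->]|[k ? ->]]]]].
- by case/mapP=> c' /IH h -> /h.
- case: (complete a).
  + by case/mapP=> c' /IHb h -> /= /andP[-> /h].
  + by case/mapP=> c' /IHa h -> /= /andP[/h -> ->].
Qed.

Lemma expl_complete d nv (A : pabs) : complete A -> expl d nv A = [::].
Proof.
elim: A d => //= [b IH|a IHa b IHb] d; first by move=> /IH ->.
by case/andP=> -> /IHb ->.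
Qed.

Fixpoint NA (A : pabs) : bool :=
  match A with
  | PLam b => NA b
  | PApp a b => if complete a then NA b else NA a && (avars b == [::])
  | _ => true
  end.

Lemma NA_nil (A : pabs) : avars A = [::] -> NA A.
Proof.
elim: A => //= [a IHa b IHb] E.
have Ea : avars a = [::] by case: (avars a) E.
have Eb : avars b = [::] by move: E; rewrite Ea.
by rewrite Eb IHa ?IHb //; case: (complete a).
Qed.

Lemma expl_avars d nv (A c : pabs) : c \in expl d nv A -> NA A ->
  NA c /\ (avars c = avars A \/ exists2 k, k <= nv & avars c = avars A ++ [:: k]).
Proof.
elim: A d c => [|b IH|a IHa b IHb|i|t|i] d c //=.
- case/fills_cases => [->|[->|[[i ? ->]|[[t ->]|[k ? ->]]]]] _; split=> //; try by left.
  by right; exists k.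
- by case/mapP=> c' /IH h -> /h.
- case Ca: (complete a).
  + case/mapP=> c' /IHb h -> /h[Hn Ha]; rewrite /= Ca; split=> //.
    case: Ha => [->|[k Hk ->]]; [by left|by right; exists k; rewrite ?catA].
  + case/mapP=> c' /IHa h -> /andP[/h[Hn Ha] /eqP Hb]; rewrite /= Hb !cats0.
    split.
      by case: (complete c'); rewrite ?Hn ?Hb ?eqxx // NA_nil.
    by case: Ha => [->|[k Hk ->]]; [left|right; exists k].
Qed.

Definition mx (s : seq nat) : nat := foldr (fun k m => maxn k.+1 m) 0 s.

Lemma mx_cat s t : mx (s ++ t) = maxn (mx s) (mx t).
Proof. by elim: s => [|j s IH] /=; rewrite ?max0n // IH maxnA. Qed.

Lemma nvars_mx (A : pabs) : nvars A = mx (avars A).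
Proof. by elim: A => //= a IHa b IHb; rewrite mx_cat IHa IHb. Qed.

Lemma canon_cat n s t :
  canon_from n (s ++ t) = canon_from n s && canon_from (maxn n (mx s)) t.
Proof.
elim: s n => [|j s IH] n /=; first by rewrite maxn0.
by rewrite IH maxnA andbA.
Qed.

Lemma expl_canonical (A c : pabs) : c \in expl 0 (nvars A) A -> NA A ->
  canonical A -> canonical c /\ NA c.
Proof.
move=> /expl_avars h /h [Hn Ha] HA; split=> //; rewrite /canonical in HA *.
case: Ha => [->|[k Hk ->]] //; rewrite canon_cat HA /= andbT.
by rewrite max0n -nvars_mx.
Qed.


Fixpoint instb (q a : pabs) : bool :=
  match q, a with
  | PHole, _ => true
  | PLam q, PLam a => instb q a
  | PApp q1 q2, PApp a1 a2 => instb q1 a1 && instb q2 a2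
  | _, _ => q == a
  end.

Lemma instb_complete (q a : pabs) : instb q a -> complete q -> q = a.
Proof.
elim: q a => [|q IH|q1 IH1 q2 IH2|i|t|i] [|a|a1 a2|j|u|j] //=; try by move/eqP.
- by move=> /IH h /h ->.
- by case/andP=> /IH1 h1 /IH2 h2 /andP[/h1 -> /h2 ->].
Qed.

Lemma instb_psize (q a : pabs) : instb q a -> psize q <= psize a.
Proof.
elim: q a => [|q IH|q1 IH1 q2 IH2|i|t|i] [|a|a1 a2|j|u|j] //=;
  try by move/eqP=> ->.
- by move/IH.
- by case/andP=> /IH1 h1 /IH2 h2; lia.
Qed.

Lemma fills_lam d nv : PLam (PHole T) \in fills T d nv.
Proof. by rewrite /fills mem_cat mem_seq2 eqxx. Qed.
Lemma fills_app d nv : PApp (PHole T) (PHole T) \in fills T d nv.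
Proof. by rewrite /fills mem_cat mem_seq2 eqxx orbT. Qed.
Lemma fills_var d nv j : j < d -> PVar T j \in fills T d nv.
Proof. by move=> h; rewrite /fills !mem_cat map_f ?orbT // mem_iota. Qed.
Lemma fills_prim d nv u : PPrim u \in fills T d nv.
Proof. by rewrite /fills !mem_cat map_f ?orbT // mem_enum. Qed.
Lemma fills_avar d nv j : j <= nv -> PAVar T j \in fills T d nv.
Proof. by move=> h; rewrite /fills !mem_cat [_ \in map (PAVar T) _]map_f ?orbT // mem_iota. Qed.

Lemma instb_refl (a : pabs) : instb a a.
Proof. by elim: a => //= [a1 -> a2 ->]. Qed.

Lemma child_exists (Q : pabs) : forall A d nv m,
  instb Q A -> complete A -> ~~ complete Q -> pscoped d A ->
  canon_from m (avars A) -> maxn m (mx (avars Q)) <= nv ->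
  exists2 c, c \in expl d nv Q & instb c A.
Proof.
elim: Q => [|q IH|q1 IH1 q2 IH2|i|t|i] A d nv m //=.
- move=> _; case: A => [|a|a1 a2|j|u|j] //= _ _.
  + by move=> _ _ _; exists (PLam (PHole T)); [apply: fills_lam|].
  + by move=> _ _ _; exists (PApp (PHole T) (PHole T)); [apply: fills_app|].
  + by move=> Hj _ _; exists (PVar T j); [apply: fills_var|apply: instb_refl].
  + by move=> _ _ _; exists (PPrim u); [apply: fills_prim|apply: instb_refl].
  + move=> _ /andP[Hj _]; rewrite maxn0 => Hm.
    by exists (PAVar T j); [apply: fills_avar; lia|apply: instb_refl].
- case: A => [|a|a1 a2|j|u|j] //= Hi Ca Cq Hs Hc Hm.
  have [c Hc' Hci] := IH a d.+1 nv m Hi Ca Cq Hs Hc Hm.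
  by exists (PLam c) => //; rewrite map_f.
- case: A => [|a|a1 a2|j|u|j] //= /andP[Hi1 Hi2] /andP[Ca1 Ca2] Cq
    /andP[Hs1 Hs2]; rewrite canon_cat mx_cat => /andP[Hc1 Hc2] Hm.
  case Cq1: (complete q1).
  + have E := instb_complete Hi1 Cq1; subst q1.
    move: Cq; rewrite Cq1 /= => Cq2.
    have [|c Hc' Hci] := IH2 a2 d nv (maxn m (mx (avars a1))) Hi2 Ca2 Cq2 Hs2 Hc2.
      by rewrite -maxnA.
    by exists (PApp a1 c); rewrite ?map_f //= Hci instb_refl.
  + have [|c Hc' Hci] := IH1 a1 d nv m Hi1 Ca1 (negbT Cq1) Hs1 Hc1.
      by apply: leq_trans Hm; lia.
    by exists (PApp c q2); rewrite ?map_f //= Hci Hi2.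
Qed.




Section Bound.
Variable bound : nat.

Inductive sder : pabs -> pabs -> Prop :=
| sd_refl A : sder A A
| sd_step A c B : c \in children bound A -> sder c B -> sder A B.

Lemma children_expl (A c : pabs) :
  c \in children bound A -> c \in expl 0 (nvars A) A /\ psize c <= bound.
Proof. by rewrite mem_filter => /andP[]. Qed.

Lemma sder_derivable (A B : pabs) : sder A B -> derivable A B.
Proof.
elim=> [A'|A' c B' /children_expl[/expl_expand h _] _ IH]; first by constructor.
by apply: der_step IH.
Qed.

Lemma sder_complete (A B : pabs) : sder A B -> complete A -> A = B.
Proof.
case=> // A' c B' /children_expl[] + _ _ Ca.
by rewrite expl_complete.
Qed.

Lemma sder_inv (A B : pabs) : sder A B -> complete B -> ~~ complete A ->
  exists2 c, c \in children bound A & sder c B.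
Proof.
case=> [A0 CB NA0|A0 c B0 hc hs _ _]; first by rewrite CB in NA0.
by exists c.
Qed.

Lemma completeness (A : pabs) : complete A -> pscoped 0 A -> canonical A ->
  psize A <= bound -> forall Q, instb Q A -> sder Q A.
Proof.
move=> CA SA NA' BA Q.
move: {2}(2 * psize A - (2 * psize Q - holes Q)) (leqnn (2 * psize A - (2 * psize Q - holes Q))) => n.
elim: n Q => [|n IH] Q Hn HQ.
- case CQ: (complete Q); first by rewrite (instb_complete HQ CQ); constructor.
  have [|c Hc Hci] := @child_exists Q A 0 (nvars Q) 0 HQ CA (negbT CQ) SA NA'.
    by rewrite max0n nvars_mx.
  have := expl_size Hc; have := instb_psize Hci; have := holes_le c;
    have := holes_le Q; lia.
- case CQ: (complete Q); first by rewrite (instb_complete HQ CQ); constructor.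
  have [|c Hc Hci] := @child_exists Q A 0 (nvars Q) 0 HQ CA (negbT CQ) SA NA'.
    by rewrite max0n nvars_mx.
  apply: (@sd_step _ c).
    by rewrite mem_filter Hc andbT (leq_trans (instb_psize Hci)).
  have Hn' : 2 * psize A - (2 * psize c - holes c) <= n.
    have := expl_size Hc; have := instb_psize Hci; have := holes_le c;
      have := holes_le Q; lia.
  exact: IH Hn' Hci.
Qed.

Definition w (A : pabs) : nat := (2 * bound).+1 - (2 * psize A - holes A).

Lemma child_w (A c : pabs) : c \in children bound A -> w c < w A.
Proof.
move=> /children_expl[/expl_size h hb]; rewrite /w.
have := holes_le c; have := holes_le A; lia.
Qed.

Fixpoint Rl (f : nat) (Q : pabs) : seq pabs :=
  match f with
  | 0 => [:: Q]
  | f'.+1 => Q :: flatten [seq Rl f' c | c <- children bound Q]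
  end.

Lemma sder_Rl (Q B : pabs) : sder Q B -> forall f, w Q <= f -> B \in Rl f Q.
Proof.
elim=> [A' [|f]|A' c B' Hc _ IH [|f]] /= Hf; rewrite ?inE ?eqxx //.
- by have := child_w Hc; lia.
- apply/orP; right; apply/flatten_mapP; exists c => //.
  by apply: IH; have := child_w Hc; lia.
Qed.

End Bound.

Definition mstep (M' M : seq nat) : Prop :=
  exists x L M0, [/\ perm_eq M (x :: M0), perm_eq M' (M0 ++ L) & all (fun y => y < x) L].

Lemma Acc_perm M M2 : Acc mstep M -> perm_eq M M2 -> Acc mstep M2.
Proof.
move=> [H] P; constructor=> y [x [L [M0 [P1 P2 HL]]]].
apply: H; exists x, L, M0; split=> //; exact: perm_trans P P1.
Qed.

Lemma Acc_cat M N : Acc mstep M -> Acc mstep N -> Acc mstep (M ++ N).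
Proof.
move=> AM; elim: AM N => {}M _ IHM N AN.
elim: AN => {}N AN' IHN.
constructor=> y [x [L [M0 [P1 P2 HL]]]].
have xin : x \in M ++ N by rewrite (perm_mem P1) inE eqxx.
move/permP: P1 => P1; move/permP: P2 => P2.
rewrite mem_cat in xin; case/orP: xin => xin.
- have /permP PM := perm_to_rem xin.
  have H := IHM (rem x M ++ L) _ N (Acc_intro _ AN').
  apply: Acc_perm (H _) _.
    by exists x, L, (rem x M); split=> //; apply/permP.
  apply/permP=> p; move: (P1 p) (P2 p) (PM p); rewrite !count_cat /=; move: (nat_of_bool (p x)) => px; lia.
- have /permP PN := perm_to_rem xin.
  have H := IHN (rem x N ++ L).
  apply: Acc_perm (H _) _.
    by exists x, L, (rem x N); split=> //; apply/permP.
  apply/permP=> p; move: (P1 p) (P2 p) (PN p); rewrite !count_cat /=; move: (nat_of_bool (p x)) => px; lia.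
Qed.

Lemma Acc_nil : Acc mstep [::].
Proof. by constructor=> y [x [L [M0 [P1 _ _]]]]; move/perm_size: P1. Qed.

Lemma Acc_lt n : forall x, x < n -> Acc mstep [:: x].
Proof.
elim: n => [|n IH] x; first by [].
rewrite ltnS => Hx.
have AL : forall L, all (fun y => y < x) L -> Acc mstep L.
  elim=> [|a L IHL] /=; first by move=> _; exact: Acc_nil.
  case/andP=> Ha HL.
  have := @Acc_cat [:: a] L; apply.
    by apply: IH; apply: leq_trans Ha Hx.
  exact: IHL.
constructor=> y [z [L [M0 [P1 P2 HL]]]].
have : z \in [:: x] by rewrite (perm_mem P1) inE eqxx.
rewrite inE => /eqP Ez; subst z.
have S := perm_size P1.
have E0 : M0 = [::] by case: M0 S {P1 P2}.
subst M0.
apply: Acc_perm (AL L HL) _; rewrite perm_sym; exact: P2.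
Qed.

Lemma Acc_all M : Acc mstep M.
Proof.
elim: M => [|x M IH]; first exact: Acc_nil.
exact: (@Acc_cat [:: x] M (@Acc_lt x.+1 x (ltnSn x)) IH).
Qed.

Section Main.
Variable R : realType.
Variable U : pabs -> R.
Variable bound : nat.

Lemma fold_inv (Pr : pabs -> Prop) b l :
  (forall B, b = Some B -> Pr B) -> (forall c, c \in l -> Pr c) ->
  forall B, foldl (update U) b l = Some B -> Pr B.
Proof.
elim: l b => [|c l IH] b Hb Hl /=; first exact: Hb.
apply: IH; last by move=> c' h; apply: Hl; rewrite inE h orbT.
move=> B; case: b Hb => [a|] Hb /=.
- case: ifP => _ [<-]; last exact: Hb.
  by apply: Hl; rewrite inE eqxx.
- by case=> <-; apply: Hl; rewrite inE eqxx.
Qed.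

Lemma fold_mono b l B : b = Some B ->
  exists B', foldl (update U) b l = Some B' /\ (U B <= U B')%R.
Proof.
elim: l b B => [|c l IH] b B -> /=; first by exists B.
case: ifP => h.
- have [B' [E le]] := IH (Some c) c erefl; exists B'; split=> //.
  exact: le_trans (ltW h) le.
- exact: IH.
Qed.

Lemma fold_mem b l c : c \in l ->
  exists B', foldl (update U) b l = Some B' /\ (U c <= U B')%R.
Proof.
elim: l b => [|x l IH] b //; rewrite inE => /orP[/eqP ->|h] /=; last exact: IH.
have [B1 [E1 le1]] : exists B1, update U b x = Some B1 /\ (U x <= U B1)%R.
  case: b => [a|] /=; last by exists x.
  case: ifP => h; first by exists x.
  by exists a; split=> //; rewrite leNgt h.
have [B' [E le]] := fold_mono l E1.
by exists B'; split=> //; exact: le_trans le1 le.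
Qed.

Lemma argmax (l : seq pabs) x0 : x0 \in l ->
  exists2 A, A \in l & forall A', A' \in l -> (U A' <= U A)%R.
Proof.
elim: l x0 => [|x l IH] x0 // _.
case: l IH => [|y l'] IH.
  by exists x; [rewrite mem_head | move=> A'; rewrite inE => /eqP ->].
have [A hA hmax] := IH y (mem_head _ _).
case: (leP (U x) (U A)) => h.
- exists A; first by rewrite inE hA orbT.
  by move=> A'; rewrite inE => /orP[/eqP ->|/hmax].
- exists x; first by rewrite mem_head.
  move=> A'; rewrite inE => /orP[/eqP ->|/hmax h'] //.
  exact: le_trans h' (ltW h).
Qed.

Definition Good (Q : pabs) := [&& pscoped 0 Q, canonical Q, NA Q & ~~ complete Q].
Definition inSb (A : pabs) := [&& complete A, pscoped 0 A, canonical A & psize A <= bound].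

Lemma inSP A : inS bound A <-> inSb A.
Proof. by rewrite /inSb; split; [case=> -> -> -> ->|case/and4P]. Qed.

Lemma child_good A c : Good A -> c \in children bound A ->
  [&& pscoped 0 c, canonical c, NA c & psize c <= bound].
Proof.
case/and4P=> S C N _ /children_expl[hc hb].
have [C' N'] := expl_canonical hc N C.
by rewrite (expl_scoped hc S) C' N' hb.
Qed.

Lemma term_acc M : Acc mstep M -> forall s, map (w bound) (queue s) = M ->
  Acc (fun s' s => step U bound s s') s.
Proof.
elim=> {}M _ IH s Hs; constructor=> s' Hst.
case: Hst Hs => [A q b|A q b _] /= Hs; apply: (IH _ _ _ erefl).
- exists (w bound A), (map (w bound) [seq c <- children bound A | ~~ complete c]),
    (map (w bound) q).
  split; first by rewrite -Hs.
    by rewrite map_cat.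
  rewrite all_map; apply/allP=> c; rewrite mem_filter => /andP[_ hc] /=.
  exact: child_w hc.
- by exists (w bound A), [::], (map (w bound) q); rewrite -Hs cats0.
Qed.

Variable Astar : pabs.
Hypothesis HAs : inS bound Astar.
Hypothesis Hopt : forall A', inS bound A' -> (U A' <= U Astar)%R.

Definition Inv (s : state T) :=
  [/\ (forall Q, Q \in queue s -> Good Q),
      (forall B, best s = Some B -> inS bound B) &
      ((exists2 Q, Q \in queue s & sder bound Q Astar) \/
       exists B, best s = Some B /\ (U Astar <= U B)%R)].

Lemma inv_reach s : reachable U bound s -> Inv s.
Proof.
elim=> [|{}s s' _ IH Hst].
- split=> //=.
  + by move=> Q; rewrite inE => /eqP ->.
  + left; exists (PHole T); first by rewrite inE.
    by case: HAs => C S N B; apply: completeness.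
- case: Hst IH => [A q b|A q b [H HD]] [HG HB HW] /=.
  + have GA : Good A by apply: HG; rewrite mem_head.
    split.
    * move=> Q; rewrite mem_cat => /orP[h|].
        by apply: HG; rewrite inE h orbT.
      rewrite mem_filter => /andP[nc hc].
      by rewrite /Good nc andbT; case/and4P: (child_good GA hc) => -> -> -> _.
    * apply: (fold_inv (Pr := inS bound)) => // c.
      rewrite mem_filter => /andP[cc hc]; apply/inSP.
      by rewrite /inSb cc; case/and4P: (child_good GA hc) => -> -> _ ->.
    * case: HW => [[Q hQ hd]|[B [Eb le]]].
      - rewrite inE in hQ; case/orP: hQ => [/eqP EQ|hQ]; last first.
          by left; exists Q => //; rewrite mem_cat hQ.
        subst Q.
        have [c hc hs] : exists2 c, c \in children bound A & sder bound c Astar.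
          apply: sder_inv hd _ _; first by case: HAs.
          by case/and4P: GA.
        case Cc: (complete c).
        - have Ec := sder_complete hs Cc; subst c.
          right; apply: fold_mem; by rewrite mem_filter Cc.
        - by left; exists c => //; rewrite mem_cat mem_filter Cc hc orbT.
      - right; have [B' [E le']] := fold_mono [seq c <- children bound A | complete c] Eb.
        by exists B'; split=> //; exact: le_trans le le'.
  + split.
    * by move=> Q hQ; apply: HG; rewrite inE hQ orbT.
    * exact: HB.
    * case: HW => [[Q hQ hd]|]; last by right.
      rewrite inE in hQ; case/orP: hQ => [/eqP EQ|hQ]; last by left; exists Q.
      subst Q; exfalso.
      have [A2 hA2 [_ hlt]] := HD Astar HAs (sder_derivable hd).
      by move: (Hopt hA2); rewrite leNgt hlt.
Qed.

End Main.
End Lemmas.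

Local Open Scope ring_scope.

Theorem lemma3p1 (T : finType) (R : realType) (P : seq (term T))
    (U : pabs T -> R) :
  P <> [::] -> all (@tclosed T) P ->
  (* the search always terminates ... *)
  Acc (fun s' s => step U (corpus_bound P) s s') (init_state T) /\
  (* ... and whenever it stops (empty queue), it has found an optimum of S *)
  (forall s, reachable U (corpus_bound P) s -> queue s = [::] ->
     exists A, best s = Some A /\ inS (corpus_bound P) A /\
       forall A', inS (corpus_bound P) A' -> U A' <= U A).
Proof.
move=> hP _; set bound := corpus_bound P.
split.
  by apply: (@term_acc T R U bound _ (Acc_all (map (w bound) [:: PHole T]))).
move=> s Hr Hq.
have hb : (0 < bound)%N.
  rewrite /bound /corpus_bound; case: P hP {bound Hr} => // p P' _.
  by rewrite big_cons; apply: leq_trans (leq_maxl _ _); case: p.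
have S0 : inS bound (PAVar T 0) by split.
set l := [seq A <- Rl bound (w bound (PHole T)) (PHole T) | inSb bound A].
have memS : forall A, inS bound A -> A \in l.
  move=> A hA; rewrite mem_filter; apply/andP; split; first by apply/inSP.
  case: hA => C Sc N B; apply: sder_Rl => //; exact: completeness.
have [Astar hAs hmax] := argmax U (memS _ S0).
have inSAs : inS bound Astar by move: hAs; rewrite mem_filter => /andP[/inSP].
have opt : forall A', inS bound A' -> (U A' <= U Astar)%R by move=> A' /memS /hmax.
case: (inv_reach inSAs opt Hr) => _ HB [[Q]|[B [Eb le]]]; first by rewrite Hq.
exists B; split => //; split; first exact: HB.
by move=> A' /opt h; exact: le_trans h le.
Qed.
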